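(* Let $p,q,r\in(0,1/36)$, $h=1/2$, $a=1/3$, and let $\mathcal S=\{S_1,\dots,S_6\}$ be the system on $\mathbb R$ given by $S_1(x)=px$, $S_2(x)=a+rx$, $S_3(x)=h-qx$, $S_4(x)=h-r+rx$, $S_5(x)=1-a-rx$, $S_6(x)=1-r+rx$. If $\log p/\log r$ is irrational, then $\mathcal S$ does not satisfy the Weak Separation Property (for every $q\in(0,1/36)$).
   Context: For a system $\{S_1,\dots,S_m\}$ of contracting similarities of $\mathbb R$, let $\mathcal F=\{S_{\mathbf i}^{-1}S_{\mathbf j}:\mathbf i,\mathbf j\in I^*\}$, where $I^*$ is the set of finite words over $\{1,\dots,m\}$ and $S_{j_1\dots j_k}=S_{j_1}\circ\dots\circ S_{j_k}$. The system satisfies the Weak Separation Property (WSP) if $\mathrm{Id}\notin\overline{\mathcal F\setminus\{\mathrm{Id}\}}$, the closure taken in the space of affine maps $x\mapsto \lambda x+c$ of $\mathbb R$ with the topology of convergence of the coefficients $(\lambda,c)$. *)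

(* Defs.v *)
From Stdlib Require Import Reals List ZArith.
Import ListNotations.
Open Scope R_scope.

Record affine := mkAff { lam : R; tr : R }.

Definition aff_apply (f : affine) (x : R) : R := lam f * x + tr f.

Definition aff_id : affine := mkAff 1 0.

(* composition: (aff_comp f g) x = f (g x) *)
Definition aff_comp (f g : affine) : affine :=
  mkAff (lam f * lam g) (lam f * tr g + tr f).

Definition aff_inv (f : affine) : affine :=
  mkAff (/ lam f) (- tr f / lam f).

(* A system {S_1,...,S_m}: S : nat -> affine, only indices 1..m used.
   A finite word is a list of indices in {1,...,m}; the empty word gives Id. *)
Definition is_word (m : nat) (w : list nat) : Prop :=
  Forall (fun i => (1 <= i <= m)%nat) w.

Definition word_map (S : nat -> affine) (w : list nat) : affine :=
  fold_right (fun i acc => aff_comp (S i) acc) aff_id w.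

Definition in_F (m : nat) (S : nat -> affine) (f : affine) : Prop :=
  exists wi wj, is_word m wi /\ is_word m wj /\
    f = aff_comp (aff_inv (word_map S wi)) (word_map S wj).

(* Id lies in the closure of F \ {Id} (topology of convergence of (lam, c)). *)
Definition id_in_closure (m : nat) (S : nat -> affine) : Prop :=
  forall eps : R, eps > 0 ->
    exists f, in_F m S f /\ f <> aff_id /\
      Rabs (lam f - 1) < eps /\ Rabs (tr f) < eps.

Definition WSP (m : nat) (S : nat -> affine) : Prop :=
  ~ id_in_closure m S.

Definition sysS (p q r : R) (i : nat) : affine :=
  let h := 1/2 in let a := 1/3 in
  match i with
  | 1%nat => mkAff p 0
  | 2%nat => mkAff r a
  | 3%nat => mkAff (- q) h
  | 4%nat => mkAff r (h - r)
  | 5%nat => mkAff (- r) (1 - a)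
  | 6%nat => mkAff r (1 - r)
  | _ => aff_id
  end.

Definition irrational (x : R) : Prop :=
  ~ exists (a b : Z), b <> 0%Z /\ x = IZR a / IZR b.

(* Main.v *)
Require Import Defs.
From Stdlib Require Import Reals List ZArith Lia Lra.
Import ListNotations.
Open Scope R_scope.


Lemma W6 p q r k w : word_map (sysS p q r) (repeat 6%nat k ++ w) =
  mkAff (r^k * lam (word_map (sysS p q r) w)) (1 - r^k + r^k * tr (word_map (sysS p q r) w)).
Proof.
  induction k; simpl.
  - destruct (word_map (sysS p q r) w); simpl; f_equal; ring.
  - rewrite IHk; unfold aff_comp; simpl; f_equal; ring.
Qed.

Lemma W1 p q r m w : word_map (sysS p q r) (repeat 1%nat m ++ w) =
  mkAff (p^m * lam (word_map (sysS p q r) w)) (p^m * tr (word_map (sysS p q r) w)).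
Proof.
  induction m; simpl.
  - destruct (word_map (sysS p q r) w); simpl; f_equal; ring.
  - rewrite IHm; unfold aff_comp; simpl; f_equal; ring.
Qed.

Lemma isw_rep i k w : (1 <= i <= 6)%nat -> is_word 6 w -> is_word 6 (repeat i k ++ w).
Proof. intros Hi Hw; induction k; simpl; auto. constructor; auto. Qed.

Lemma key p q r m k : 0 < p -> 0 < r ->
  let f := aff_comp (aff_inv (word_map (sysS p q r) (4%nat :: repeat 6%nat k ++ [2%nat])))
                    (word_map (sysS p q r) (3%nat :: repeat 1%nat m ++ [5%nat])) in
  let t := q * p^m / r^(S k) in
  lam f = t /\ tr f = (2/3) * (1 - t) / r.
Proof.
  intros Hp Hr f t. subst f t.
  assert (word_map (sysS p q r) (4%nat :: repeat 6%nat k ++ [2%nat]) =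
          aff_comp (sysS p q r 4%nat) (word_map (sysS p q r) (repeat 6%nat k ++ [2%nat]))) as E1 by reflexivity.
  assert (word_map (sysS p q r) (3%nat :: repeat 1%nat m ++ [5%nat]) =
          aff_comp (sysS p q r 3%nat) (word_map (sysS p q r) (repeat 1%nat m ++ [5%nat]))) as E2 by reflexivity.
  rewrite E1, E2, W6, W1. simpl.
  assert (0 < r^k) by (apply pow_lt; auto).
  split; field; lra.
Qed.
Section Dens.
Variables al be : R.
Hypothesis Hal : 0 < al.
Hypothesis Hbe : 0 < be.
Hypothesis Hind : forall A B : Z, IZR A * al + IZR B * be = 0 -> A = 0%Z /\ B = 0%Z.

Lemma halve N : exists j k : Z, 0 < IZR j * al + IZR k * be <= be / 2^N.
Proof.
  induction N.
  - exists 0%Z, 1%Z. simpl. lra.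
  - destruct IHN as (j & k & H1 & H2).
    set (e := IZR j * al + IZR k * be) in *.
    assert (exists ga gb : Z, (forall f, ~ (ga - f*j = 0 /\ gb - f*k = 0)%Z) /\ 0 < IZR ga * al + IZR gb * be) as (ga & gb & Hg & Hgp).
    { destruct (Z.eq_dec j 0).
      - exists 1%Z, 0%Z. split; [intros f; lia| simpl; lra].
      - exists 0%Z, 1%Z. split; [intros f [H3 H4]; assert (f*j = 0)%Z as H5 by lia; apply Z.mul_eq_0 in H5; lia| simpl; lra]. }
    set (g := IZR ga * al + IZR gb * be) in *.
    set (f := (up (g/e) - 1)%Z).
    destruct (archimed (g/e)) as [A1 A2].
    assert (Hf1 : IZR f > g/e - 1) by (unfold f; rewrite minus_IZR; lra).
    assert (Hf2 : IZR f <= g/e) by (unfold f; rewrite minus_IZR; lra).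
    set (rho := g - IZR f * e).
    assert (Hrho : rho = IZR (ga - f*j) * al + IZR (gb - f*k) * be).
    { unfold rho, g, e. rewrite !minus_IZR, !mult_IZR. ring. }
    assert (rho < e).
    { unfold rho. apply Rmult_gt_compat_r with (r := e) in Hf1; [|lra].
      replace ((g/e - 1) * e) with (g - e) in Hf1 by (field; lra). lra. }
    assert (0 <= rho).
    { unfold rho. apply Rmult_le_compat_r with (r := e) in Hf2; [|lra].
      replace (g/e * e) with g in Hf2 by (field; lra). lra. }
    assert (rho <> 0).
    { intro Hz. rewrite Hrho in Hz. apply Hind in Hz. apply (Hg f). lia. }
    assert (be / 2 ^ S N = (be / 2^N) / 2) as E by (simpl; field; apply pow_nonzero; lra).
    rewrite E.
    destruct (Rle_dec rho (e/2)).
    + exists (ga - f*j)%Z, (gb - f*k)%Z. rewrite <- Hrho. lra.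
    + exists (j - (ga - f*j))%Z, (k - (gb - f*k))%Z.
      replace (IZR (j - (ga - f * j)) * al + IZR (k - (gb - f * k)) * be) with (e - rho).
      2:{ rewrite Hrho. unfold e. rewrite !minus_IZR. ring. }
      lra.
Qed.

Lemma pow2_ge N : INR N <= 2^N.
Proof.
  induction N. simpl; lra. rewrite S_INR. simpl.
  assert (1 <= 2^N) by (apply pow_R1_Rle; lra). lra.
Qed.

Lemma small eta : 0 < eta -> exists j k : Z, 0 < IZR j * al + IZR k * be < eta.
Proof.
  intros He. destruct (archimed_cor1 (eta/be)) as (N & HN & HN0).
  { apply Rdiv_lt_0_compat; lra. }
  destruct (halve N) as (j & k & H1 & H2). exists j, k. split; [lra|].
  assert (0 < INR N) by (apply lt_0_INR; lia).
  assert (INR N <= 2^N) by apply pow2_ge.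
  assert (be / 2^N <= be / INR N).
  { unfold Rdiv. apply Rmult_le_compat_l; [lra|]. apply Rinv_le_contravar; lra. }
  assert (be / INR N < eta).
  { apply Rmult_lt_compat_l with (r := be) in HN; [|lra].
    replace (be * (eta/be)) with eta in HN by (field; lra). unfold Rdiv. lra. }
  lra.
Qed.
End Dens.
Lemma INR_Z z : (0 <= z)%Z -> INR (Z.to_nat z) = IZR z.
Proof. intros; rewrite INR_IZR_INZ, Z2Nat.id; auto. Qed.

Lemma nat_big x : exists N : nat, x < INR N.
Proof.
  destruct (Rle_dec x 0). exists 1%nat. simpl. lra.
  destruct (archimed x) as [A1 A2]. exists (Z.to_nat (up x)).
  rewrite INR_Z. lra. apply le_IZR. lra.
Qed.

Section T.
Variables al be : R.
Hypothesis Hal : 0 < al.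
Hypothesis Hbe : 0 < be.
Hypothesis Hind : forall A B : Z, IZR A * al + IZR B * be = 0 -> A = 0%Z /\ B = 0%Z.

Lemma natD eta : 0 < eta -> eta <= al -> eta <= be ->
  exists J K : nat, 0 < Rabs (INR J * al - INR K * be) < eta.
Proof.
  intros He H1 H2. destruct (small al be Hal Hbe Hind eta He) as (j & k & E1 & E2).
  destruct (Z_le_gt_dec 0 j).
  - assert (k <= 0)%Z.
    { destruct (Z_le_gt_dec k 0); auto. exfalso.
      assert (1 <= IZR k) by (apply IZR_le; lia).
      assert (0 <= IZR j) by (apply IZR_le; lia).
      assert (0 <= IZR j * al) by (apply Rmult_le_pos; lra). nra. }
    exists (Z.to_nat j), (Z.to_nat (-k)). rewrite !INR_Z by lia. rewrite opp_IZR.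
    rewrite Rabs_right; lra.
  - assert (0 < k)%Z.
    { destruct (Z_le_gt_dec k 0); try lia. exfalso.
      assert (IZR k <= 0) by (apply IZR_le; lia).
      assert (IZR j <= -1) by (apply IZR_le; lia). nra. }
    exists (Z.to_nat (-j)), (Z.to_nat k). rewrite !INR_Z by lia. rewrite opp_IZR.
    rewrite Rabs_left; lra.
Qed.

Lemma target L eta : L < 0 -> 0 < eta -> eta <= al -> eta <= be ->
  exists m n : nat, (1 <= n)%nat /\ 0 < Rabs (L - INR m * al + INR n * be) < eta.
Proof.
  intros HL He H1 H2. destruct (natD eta He H1 H2) as (J & K & HD).
  set (D := INR J * al - INR K * be) in *.
  assert (exists m0 n0 : nat, (1 <= n0)%nat /\ 0 < (L - INR m0 * al + INR n0 * be) / D)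
    as (m0 & n0 & Hn0 & Hy).
  { destruct (Rlt_dec 0 D).
    - destruct (nat_big (-L/be)) as (N & HN). exists 0%nat, (S N). split; [lia|].
      apply Rdiv_lt_0_compat; auto. rewrite S_INR. simpl.
      apply Rmult_lt_compat_r with (r := be) in HN; auto.
      replace (-L/be*be) with (-L) in HN by (field; lra). nra.
    - assert (D < 0).
      { destruct (Rtotal_order D 0) as [?|[E|?]]; [auto| rewrite E, Rabs_R0 in HD; lra | lra]. }
      destruct (nat_big ((L+be)/al)) as (N & HN). exists N, 1%nat. split; [lia|].
      apply Rmult_lt_compat_r with (r := al) in HN; auto.
      replace ((L+be)/al*al) with (L+be) in HN by (field; lra).
      replace ((L - INR N * al + INR 1 * be) / D) with ((-(L - INR N * al + INR 1 * be)) / (-D)) by (field; lra).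
      apply Rdiv_lt_0_compat; simpl; lra. }
  set (L0 := L - INR m0 * al + INR n0 * be) in *.
  set (y := L0 / D) in *.
  set (s := (- up (- y))%Z).
  destruct (archimed (-y)) as [A1 A2].
  assert (Hs1 : IZR s < y) by (unfold s; rewrite opp_IZR; lra).
  assert (Hs2 : y - 1 <= IZR s) by (unfold s; rewrite opp_IZR; lra).
  assert (-1 < s)%Z by (apply lt_IZR; lra).
  assert (0 <= s)%Z by lia.
  assert (D <> 0) by (intro E; rewrite E, Rabs_R0 in HD; lra).
  exists (m0 + Z.to_nat s * J)%nat, (n0 + Z.to_nat s * K)%nat. split; [lia|].
  replace (L - INR (m0 + Z.to_nat s * J) * al + INR (n0 + Z.to_nat s * K) * be)
    with (D * (y - IZR s)).
  2:{ rewrite !plus_INR, !mult_INR, INR_Z by auto. unfold y, L0, D. field. auto. }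
  rewrite Rabs_mult, (Rabs_right (y - IZR s)) by lra.
  split.
  - apply Rmult_lt_0_compat; lra.
  - assert (Rabs D * (y - IZR s) <= Rabs D * 1) by (apply Rmult_le_compat_l; [apply Rabs_pos|lra]). lra.
Qed.
End T.

Theorem mainTheorem13 (p q r : R) :
  0 < p < 1/36 -> 0 < q < 1/36 -> 0 < r < 1/36 ->
  irrational (ln p / ln r) ->
  ~ WSP 6 (sysS p q r).
Proof.
  intros Hp Hq Hr Hirr. unfold WSP. intro HW; apply HW. clear HW.
  intros eps Heps.
  assert (ln p < 0) by (rewrite <- ln_1; apply ln_increasing; lra).
  assert (ln r < 0) by (rewrite <- ln_1; apply ln_increasing; lra).
  assert (ln q < 0) by (rewrite <- ln_1; apply ln_increasing; lra).
  set (al := - ln p). set (be := - ln r).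
  assert (Hal : 0 < al) by (unfold al; lra).
  assert (Hbe : 0 < be) by (unfold be; lra).
  assert (Hind : forall A B : Z, IZR A * al + IZR B * be = 0 -> A = 0%Z /\ B = 0%Z).
  { intros A B HAB. destruct (Z.eq_dec A 0) as [EA|NA].
    - subst A. split; auto. rewrite Rmult_0_l, Rplus_0_l in HAB.
      apply Rmult_integral in HAB. destruct HAB as [HB|HB]; [apply eq_IZR_R0; auto| lra].
    - exfalso. apply Hirr. exists (- B)%Z, A. split; auto.
      assert (IZR A <> 0) by (apply not_0_IZR; auto).
      assert (E : ln p = - IZR B * ln r / IZR A).
      { apply Rmult_eq_reg_l with (IZR A); auto.
        replace (IZR A * (- IZR B * ln r / IZR A)) with (- IZR B * ln r) by (field; auto).
        unfold al, be in HAB. lra. }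
      rewrite E, opp_IZR. field. split; auto. lra. }
  set (delta := Rmin (eps * r) (1/2)).
  assert (Hd1 : 0 < delta) by (unfold delta; apply Rmin_glb_lt; nra).
  assert (Hd2 : delta <= eps * r) by apply Rmin_l.
  assert (Hd3 : delta <= 1/2) by apply Rmin_r.
  assert (Hl1 : 0 < ln (1 + delta)) by (rewrite <- ln_1; apply ln_increasing; lra).
  assert (Hl2 : ln (1 - delta) < 0) by (rewrite <- ln_1; apply ln_increasing; lra).
  set (eta := Rmin (Rmin al be) (Rmin (ln (1+delta)) (- ln (1-delta)))).
  assert (He : 0 < eta).
  { unfold eta. apply Rmin_glb_lt; apply Rmin_glb_lt; lra. }
  assert (He1 : eta <= al) by (unfold eta; eapply Rle_trans; [apply Rmin_l|apply Rmin_l]).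
  assert (He2 : eta <= be) by (unfold eta; eapply Rle_trans; [apply Rmin_l|apply Rmin_r]).
  assert (He3 : eta <= ln (1+delta)) by (unfold eta; eapply Rle_trans; [apply Rmin_r|apply Rmin_l]).
  assert (He4 : eta <= - ln (1-delta)) by (unfold eta; eapply Rle_trans; [apply Rmin_r|apply Rmin_r]).
  destruct (target al be Hal Hbe Hind (ln q) eta) as (m & n & Hn & Hb); auto.
  set (t := q * p^m / r^n).
  assert (Hpm : 0 < p^m) by (apply pow_lt; lra).
  assert (Hrn : 0 < r^n) by (apply pow_lt; lra).
  assert (Ht0 : 0 < t) by (unfold t; apply Rdiv_lt_0_compat; nra).
  assert (Hlt : ln t = ln q - INR m * al + INR n * be).
  { unfold t, Rdiv. rewrite ln_mult, ln_mult, ln_Rinv, !ln_pow; try lra; try nra.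
    unfold al, be; ring. apply Rinv_0_lt_compat; lra. }
  rewrite <- Hlt in Hb.
  destruct Hb as [Hb1 Hb2].
  apply Rabs_def2 in Hb2. destruct Hb2 as [Hb2 Hb3].
  assert (T1 : t < 1 + delta) by (apply ln_lt_inv; lra).
  assert (T2 : 1 - delta < t) by (apply ln_lt_inv; lra).
  assert (T3 : t <> 1) by (intro E; rewrite E, ln_1, Rabs_R0 in Hb1; lra).
  destruct n as [|k]; [lia|].
  destruct (key p q r m k) as [K1 K2]; try lra.
  eexists. split; [|split; [|split]].
  - exists (4%nat :: repeat 6%nat k ++ [2%nat]), (3%nat :: repeat 1%nat m ++ [5%nat]).
    split; [|split; [|reflexivity]].
    + constructor; [lia|]. apply isw_rep; [lia|]. constructor; [lia|constructor].
    + constructor; [lia|]. apply isw_rep; [lia|]. constructor; [lia|constructor].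
  - intro E. apply T3. unfold t. rewrite <- K1, E. reflexivity.
  - rewrite K1. fold t. apply Rabs_def1; nra.
  - rewrite K2. fold t. apply Rabs_def1.
    + apply Rmult_lt_reg_r with r; [lra|]. unfold Rdiv. rewrite Rmult_assoc, Rinv_l by lra. nra.
    + apply Rmult_lt_reg_r with r; [lra|]. unfold Rdiv. rewrite Rmult_assoc, Rinv_l by lra. nra.
Qed.
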